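(* Let $p$ be an odd prime and $m,r$ positive integers. Then $S_{mp^r}\equiv S_{mp^{r-1}}\pmod{p^{2r}}$.
   Context: $(S_n)_{n\ge0}$ is the integer sequence defined by $S_0=1$, $S_1=4$ and $(n+1)^2S_{n+1}=4(3n^2+3n+1)S_n-32n^2S_{n-1}$ for $n\ge1$; equivalently $S_n=\sum_{k=0}^n\binom nk\binom{2k}k\binom{2n-2k}{n-k}$. *)

(* Defs.v *)
From mathcomp Require Import all_boot.
Set Implicit Arguments. Unset Strict Implicit. Unset Printing Implicit Defensive.

Definition S (n : nat) : nat :=
  \sum_(0 <= k < n.+1) 'C(n, k) * 'C(k.*2, k) * 'C((n - k).*2, n - k).

Lemma S0 : S 0 = 1. Proof. by rewrite /S big_nat1. Qed.

(* Main.v *)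
Require Import Defs.
From mathcomp Require Import all_boot.
From mathcomp Require Import zify.

Lemma sum_congr_mod (m n d : nat) (F G : nat -> nat) :
  (forall i, m <= i < n -> F i = G i %[mod d]) ->
  \sum_(m <= i < n) F i = \sum_(m <= i < n) G i %[mod d].
Proof.
move=> H; rewrite big_nat_cond [in RHS]big_nat_cond.
apply: (big_ind2 (fun x y => x = y %[mod d])) => //.
  by move=> a b c e h1 h2; rewrite -modnDm h1 h2 modnDm.
by move=> i /andP[Hi _]; apply: H.
Qed.

Lemma prod_congr_mod (m n d : nat) (F G : nat -> nat) :
  (forall i, m <= i < n -> F i = G i %[mod d]) ->
  \prod_(m <= i < n) F i = \prod_(m <= i < n) G i %[mod d].
Proof.
move=> H; rewrite big_nat_cond [in RHS]big_nat_cond.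
apply: (big_ind2 (fun x y => x = y %[mod d])) => //.
  by move=> a b c e h1 h2; rewrite -modnMm h1 h2 modnMm.
by move=> i /andP[Hi _]; apply: H.
Qed.

Lemma logn_fact_ext p n K : prime p -> n < K ->
  logn p n`! = \sum_(1 <= i < K) n %/ p ^ i.
Proof.
move=> pp nK; rewrite logn_fact // (@big_cat_nat _ _ _ n.+1 1 K) //=.
rewrite [X in _ + X]big1_seq ?addn0 // => i /andP[_].
rewrite mem_index_iota => /andP[Hi _]; apply: divn_small.
apply: leq_trans (ltn_expl _ (prime_gt1 pp)); lia.
Qed.

Lemma kummer p a b K : prime p -> a + b < K ->
  logn p 'C(a + b, a) = \sum_(1 <= i < K) (p ^ i <= a %% p ^ i + b %% p ^ i).
Proof.
move=> pp abK.
have := bin_fact (leq_addr b a); rewrite addKn => E.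
have := congr1 (logn p) E.
rewrite lognM ?bin_gt0 ?leq_addr ?muln_gt0 ?fact_gt0 // lognM ?fact_gt0 //.
rewrite (@logn_fact_ext p a K) ?(@logn_fact_ext p b K) ?(@logn_fact_ext p (a+b) K) //; try lia.
rewrite -big_split /=.
have -> : \sum_(1 <= i < K) (a + b) %/ p ^ i =
   \sum_(1 <= i < K) (a %/ p ^ i + b %/ p ^ i) + \sum_(1 <= i < K) (p ^ i <= a %% p ^ i + b %% p ^ i).
  by rewrite -big_split; apply: eq_bigr => i _; rewrite divnD // expn_gt0 prime_gt0.
by move=> H; lia.
Qed.

Lemma carry_lb p i k j : prime p -> p ^ i %| k + j -> ~~ (p ^ i %| k) ->
  2 <= (p ^ i <= k %% p ^ i + j %% p ^ i) + (p ^ i <= k %% p ^ i + k %% p ^ i)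
       + (p ^ i <= j %% p ^ i + j %% p ^ i).
Proof.
move=> pp dkj nk.
set d := p ^ i.
have d0 : 0 < d by rewrite expn_gt0 prime_gt0.
have xpos : 0 < k %% d by rewrite lt0n -/(dvdn d k) .
have xl : k %% d < d by rewrite ltn_mod.
have yl : j %% d < d by rewrite ltn_mod.
have dxy : d %| k %% d + j %% d by rewrite /dvdn modnDm; exact: dkj.
have e : k %% d + j %% d = d.
  move: dxy => /dvdnP [c hc].
  have c1 : c = 1.
    case: c hc => [|[|c]] hc; first lia; first done.
    nia.
  by rewrite hc c1 mul1n.
rewrite e leqnn /=.
case: (leqP d (k %% d + k %% d)); case: (leqP d (j %% d + j %% d)); lia.
Qed.

Lemma valG p R t k j : prime p -> p ^ R %| k + j -> ~~ (p ^ t.+1 %| k) -> t <= R ->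
  p ^ ((R - t) * 2) %| 'C(k + j, k) * 'C(k + k, k) * 'C(j + j, j).
Proof.
move=> pp dR nk tR.
have k0 : 0 < k by rewrite lt0n; apply: contra nk => /eqP ->; rewrite dvdn0.
have c1 : 0 < 'C(k + j, k) by rewrite bin_gt0 leq_addr.
have c2 : 0 < 'C(k + k, k) by rewrite bin_gt0 leq_addr.
have c3 : 0 < 'C(j + j, j) by rewrite bin_gt0 leq_addr.
rewrite pfactor_dvdn ?muln_gt0 ?c1 ?c2 ?c3 //.
set K := (k + j + k + j).+1.
rewrite !lognM ?muln_gt0 ?c1 ?c2 ?c3 //.
rewrite (@kummer p k j K) ?(@kummer p k k K) ?(@kummer p j j K) //; try lia.
rewrite -!big_split /=.
have pR : p ^ R <= k + j by apply: dvdn_leq; lia.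
have RK : R < p ^ R by apply: ltn_expl; apply: prime_gt1.
rewrite (@big_cat_nat _ _ _ t.+1) //=; last lia.
rewrite (@big_cat_nat _ _ _ R.+1 t.+1) //=; last lia.
apply: leq_trans (leq_addl _ _); apply: leq_trans (leq_addr _ _).
have -> : (R - t) * 2 = \sum_(t.+1 <= i < R.+1) 2 by rewrite sum_nat_const_nat; lia.
rewrite big_nat_cond [X in _ <= X]big_nat_cond; apply: leq_sum => i /andP[/andP[ti iR] _].
apply: carry_lb => //.
  by apply: dvdn_trans dR; apply: dvdn_exp2l; lia.
apply: contra nk => h; apply: dvdn_trans h; apply: dvdn_exp2l; lia.
Qed.

Definition Uf p z B := \prod_(0 <= l < B) \prod_(0 <= j < p.-1) (z + p * l + j.+1).

Lemma prod_shift a n F : \prod_(a <= i < a + n) F i = \prod_(0 <= i < n) F (a + i).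
Proof.
elim: n => [|n IH]; first by rewrite addn0 !big_geq.
by rewrite addnS !big_nat_recr ?leq_addr //= IH.
Qed.

Lemma fact_shift z N : (z + N)`! = z`! * \prod_(0 <= i < N) (z + i.+1).
Proof.
elim: N => [|N IH]; first by rewrite addn0 big_geq // muln1.
by rewrite addnS factS big_nat_recr //= IH; lia.
Qed.

Lemma block p w B : 0 < p ->
  \prod_(0 <= i < p * B) (p * w + i.+1) = p ^ B * \prod_(0 <= l < B) (w + l.+1) * Uf p (p * w) B.
Proof.
move=> p0; elim: B => [|B IH]; first by rewrite /Uf muln0 !big_geq.
rewrite mulnS addnC (@big_cat_nat _ _ _ (p * B)) //=; last lia.
rewrite prod_shift IH.
rewrite -(prednK p0) big_nat_recr //= prednK //.
rewrite /Uf big_nat_recr //= [X in _ = _ * X]big_nat_recr //= expnS.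
have -> : p * w + (p * B + p.-1).+1 = p * (w + B.+1) by lia.
have -> : \prod_(0 <= i < p.-1) (p * w + (p * B + i).+1) = \prod_(0 <= j < p.-1) (p * w + p * B + j.+1) by apply: eq_bigr => j _; lia.
lia.
Qed.

Lemma binP p x y : 0 < p ->
  'C(p * (x + y), p * x) * Uf p 0 x = 'C(x + y, x) * Uf p (p * y) x.
Proof.
move=> p0.
have e1 : p * (x + y) - p * x = p * y by lia.
have h1 : 'C(p * (x + y), p * x) * ((p * x)`! * (p * y)`!) = (p * (x + y))`!.
  by rewrite -e1 bin_fact // leq_pmul2l // leq_addr.
have e2 : (p * (x + y))`! = (p * y)`! * (p ^ x * \prod_(0 <= l < x) (y + l.+1) * Uf p (p * y) x).
  by rewrite -block // -fact_shift; congr (_`!); lia.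
have e3 : (p * x)`! = p ^ x * x`! * Uf p 0 x.
  have b := @block p 0 x p0; rewrite muln0 in b.
  have f1 := fact_shift 0 (p * x); rewrite add0n fact0 mul1n in f1.
  have f2 := fact_shift 0 x; rewrite add0n fact0 mul1n in f2.
  by rewrite f1 b f2.
have e4 : y`! * \prod_(0 <= l < x) (y + l.+1) = 'C(x + y, x) * (x`! * y`!).
  by rewrite -fact_shift addnC -(bin_fact (leq_addr y x)) addKn.
rewrite e2 e3 in h1.
set A := 'C(p * (x + y), p * x) in h1 *.
set C := 'C(x + y, x) in e4 *.
set W := \prod_(0 <= l < x) (y + l.+1) in e2 e4 h1.
have P : 0 < p ^ x * x`! * (p * y)`! * y`! by rewrite !muln_gt0 expn_gt0 p0 !fact_gt0.
apply/eqP; rewrite -(eqn_pmul2l P); apply/eqP.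
have -> : p ^ x * x`! * (p * y)`! * y`! * (A * Uf p 0 x) =
   y`! * (A * (p ^ x * x`! * Uf p 0 x * (p * y)`!)) by lia.
rewrite h1.
have -> : y`! * ((p * y)`! * (p ^ x * W * Uf p (p * y) x)) =
   (p * y)`! * p ^ x * Uf p (p * y) x * (y`! * W) by lia.
rewrite e4; lia.
Qed.

Lemma sq_lift p e a b : prime p -> odd p -> coprime p b -> a = b %[mod p] ->
  a * a = b * b %[mod p ^ e] -> a = b %[mod p ^ e].
Proof.
move=> pp op cb ab sq.
have cab : coprime (p ^ e) (a + b).
  apply: coprimeXl; rewrite prime_coprime //.
  rewrite /dvdn -modnDml ab modnDml addnn -muln2.
  rewrite -/(dvdn p (b * 2)) Euclid_dvdM // negb_or -prime_coprime // cb /=.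
  by rewrite dvdn_prime2 //; apply/eqP => p2; rewrite p2 in op.
have key : forall a b, coprime (p ^ e) (a + b) -> a * a = b * b %[mod p ^ e] ->
    b <= a -> a = b %[mod p ^ e].
  move=> x y cxy s le; apply/eqP; rewrite eqn_mod_dvd //.
  move/eqP: s; rewrite eqn_mod_dvd ?leq_mul // !mulnn subn_sqr.
  by rewrite Gauss_dvdl.
case: (leqP b a) => h; first exact: key.
by apply/esym/key; [rewrite addnC | rewrite sq | rewrite ltnW].
Qed.

Lemma Uf_cop p B : prime p -> coprime p (Uf p 0 B).
Proof.
move=> pp; rewrite /Uf; apply: (big_ind (coprime p)) => //; first exact: coprimen1.
  by move=> u v cu cv; rewrite coprimeMr cu cv.
move=> l _; rewrite big_nat_cond; apply: (big_ind (coprime p)) => //; first exact: coprimen1.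
  by move=> u v cu cv; rewrite coprimeMr cu cv.
move=> j /andP[/andP[_ jl] _].
rewrite prime_coprime // add0n dvdn_addr ?dvdn_mulr // gtnNdvd //.
by move: jl (prime_gt1 pp); lia.
Qed.

Lemma Uf_sym p z B : 0 < p ->
  Uf p z B = \prod_(0 <= l < B) \prod_(0 <= j < p.-1) (z + (p * B - (p * l + j.+1))).
Proof.
move=> p0; rewrite /Uf big_nat_rev /=; apply: eq_big_nat => l /andP[_ lB].
rewrite big_nat_rev /=; apply: eq_big_nat => j /andP[_ jp].
have h1 : p * l.+1 <= p * B by rewrite leq_pmul2l.
rewrite add0n add0n mulnBr mulnS in h1 *.
lia.
Qed.

Lemma Uf_cong p t y B : prime p -> odd p -> p ^ t %| y -> p ^ t %| B ->
  Uf p (p * y) B = Uf p 0 B %[mod p ^ (t.+1 * 2)].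
Proof.
move=> pp op dy dB.
have p0 := prime_gt0 pp.
set z := p * y; set M := p * B.
have qz : p ^ t.+1 %| z by rewrite expnS /z dvdn_pmul2l.
have qM : p ^ t.+1 %| M by rewrite expnS /M dvdn_pmul2l.
apply: (@sq_lift p _ _ _ pp op (Uf_cop p B pp)).
  rewrite /Uf; apply: prod_congr_mod => l _; apply: prod_congr_mod => j _.
  by rewrite -addnA -modnDml /z modnMr.
have gen : forall w, p ^ t.+1 %| w -> Uf p w B * Uf p w B =
    \prod_(0 <= l < B) \prod_(0 <= j < p.-1) ((p * l + j.+1) * (M - (p * l + j.+1))) %[mod p ^ (t.+1 * 2)].
  move=> w qw.
  rewrite {2}Uf_sym // /Uf -big_split /=.
  apply: prod_congr_mod => l /andP[_ lB].
  rewrite -big_split /=; apply: prod_congr_mod => j /andP[_ jp].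
  have iM : p * l + j.+1 <= M.
    have : p * l.+1 <= p * B by rewrite leq_pmul2l.
    rewrite /M mulnS; lia.
  set i := p * l + j.+1 in iM *.
  have -> : w + p * l + j.+1 = w + i by rewrite /i addnA.
  have -> : (w + i) * (w + (M - i)) = i * (M - i) + w * (w + M).
    set u := M - i; have -> : M = i + u by rewrite /u subnKC.
    lia.
  rewrite -modnDmr.
  have -> : w * (w + M) %% p ^ (t.+1 * 2) = 0.
    apply/eqP; rewrite -/(dvdn _ _) expnM -mulnn.
    exact: dvdn_mul qw (dvdn_add qw qM).
  by rewrite addn0.
by rewrite (gen z qz) (gen 0 (dvdn0 _)).
Qed.

Lemma mulmod2 d x1 x2 y1 y2 : x1 = y1 %[mod d] -> x2 = y2 %[mod d] ->
  x1 * x2 = y1 * y2 %[mod d].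
Proof. by move=> h1 h2; rewrite -modnMm h1 h2 modnMm. Qed.

Lemma cancel_cop d X Y Q : coprime d Q -> X * Q = Y * Q %[mod d] -> X = Y %[mod d].
Proof.
move=> cQ.
have key : forall x y, x * Q = y * Q %[mod d] -> y <= x -> x = y %[mod d].
  move=> x y h le; apply/eqP; rewrite eqn_mod_dvd //.
  move/eqP: h; rewrite eqn_mod_dvd ?leq_mul // -mulnBl Gauss_dvdl //.
move=> h; case: (leqP Y X) => le; first exact: key.
by apply/esym/key; [rewrite h | rewrite ltnW].
Qed.

Lemma cancel_mod p e f X Y Q Q' : prime p -> X * Q = Y * Q' ->
  Q' = Q %[mod p ^ e] -> p ^ f %| Y -> coprime p Q -> X = Y %[mod p ^ (e + f)].
Proof.
move=> pp E hQ /dvdnP[Y' eY] cQ; rewrite {}eY in E *.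
apply: (@cancel_cop _ _ _ Q); first by apply: coprimeXl.
rewrite E.
have -> : Y' * p ^ f * Q' = p ^ f * (Y' * Q') by lia.
have -> : Y' * p ^ f * Q = p ^ f * (Y' * Q) by lia.
rewrite expnD (mulnC (p ^ e)) -!muln_modr; congr (_ * _).
by rewrite -modnMmr hQ modnMmr.
Qed.

Lemma sum_shift a n F : \sum_(a <= i < a + n) F i = \sum_(0 <= i < n) F (a + i).
Proof.
elim: n => [|n IH]; first by rewrite addn0 !big_geq.
by rewrite addnS !big_nat_recr ?leq_addr //= IH.
Qed.

Lemma sum_split p N F : 0 < p ->
  \sum_(0 <= k < (p * N).+1) F k =
  \sum_(0 <= a < N.+1) F (p * a) + \sum_(0 <= a < N) \sum_(0 <= j < p.-1) F (p * a + j.+1).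
Proof.
move=> p0; elim: N => [|N IH].
  by rewrite muln0 !big_nat1 big_geq // muln0 addn0.
rewrite (@big_cat_nat _ _ _ (p * N).+1) //=; last by rewrite ltnS leq_pmul2l.
have -> : (p * N.+1).+1 = (p * N).+1 + p by rewrite mulnS; lia.
rewrite sum_shift IH.
have -> : \sum_(0 <= i < p) F ((p * N).+1 + i) =
    \sum_(0 <= j < p.-1) F (p * N + j.+1) + F (p * N.+1).
  rewrite -[X in \sum_(0 <= i < X) _](prednK p0) big_nat_recr //=.
  congr (_ + _); first by apply: eq_bigr => i _; congr F; lia.
  by congr F; rewrite mulnS; lia.
rewrite [X in _ = X + _]big_nat_recr //= [X in _ = _ + X]big_nat_recr //=.
lia.
Qed.

Definition T n k := 'C(n, k) * 'C(k.*2, k) * 'C((n - k).*2, n - k).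

Lemma T_nonmult p r' N k : prime p -> p ^ r'.+1 %| p * N -> k <= p * N -> ~~ (p %| k) ->
  p ^ (2 * r'.+1) %| T (p * N) k.
Proof.
move=> pp dN kN nk.
rewrite /T; set jj := p * N - k.
have e : p * N = k + jj by rewrite /jj subnKC.
rewrite e -!addnn.
have := @valG p r'.+1 0 k jj pp; rewrite subn0 mulnC expn1; apply => //.
by rewrite -e.
Qed.

Lemma arith_e t r' : t < r' -> 2 * r'.+1 = t.+1 * 2 + (r' - t) * 2.
Proof. lia. Qed.

Lemma T_mult p r' N a : prime p -> odd p -> p ^ r' %| N -> a <= N ->
  T (p * N) (p * a) = T N a %[mod p ^ (2 * r'.+1)].
Proof.
move=> pp op dN aN.
have p0 := prime_gt0 pp.
set b := N - a.
have eN : N = a + b by rewrite /b subnKC.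
rewrite /T.
have -> : p * N - p * a = p * b by rewrite -mulnBr.
rewrite -/b eN -!addnn -!mulnDr.
set X := _ * _ * _.
set Y := 'C(a + b, a) * 'C(a + a, a) * 'C(b + b, b).
set Q := Uf p 0 a * Uf p 0 a * Uf p 0 b.
set Q' := Uf p (p * b) a * Uf p (p * a) a * Uf p (p * b) b.
have E : X * Q = Y * Q'.
  have h1 := @binP p a b p0.
  have h2 := @binP p a a p0.
  have h3 := @binP p b b p0.
  have -> : X * Q = ('C(p * (a + b), p * a) * Uf p 0 a) * ('C(p * (a + a), p * a) * Uf p 0 a)
     * ('C(p * (b + b), p * b) * Uf p 0 b) by rewrite /X /Q; lia.
  rewrite h1 h2 h3 /Y /Q'; lia.
have cQ : coprime p Q by rewrite !coprimeMr !Uf_cop.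
have dN' : p ^ r' %| a + b by rewrite -eN.
have gen : forall t, p ^ t %| a -> p ^ t %| b -> Q' = Q %[mod p ^ (t.+1 * 2)].
  move=> t ha hb.
  rewrite /Q' /Q; apply: mulmod2; [apply: mulmod2|]; exact: Uf_cong.
case: (boolP (p ^ r' %| a)) => ha.
  have hb : p ^ r' %| b by rewrite /b; apply: dvdn_sub.
  have := @cancel_mod p (r'.+1 * 2) 0 X Y Q Q' pp E (gen _ ha hb) (dvd1n _) cQ.
  by rewrite addn0 mulnC.
have a0 : 0 < a by rewrite lt0n; apply: contra ha => /eqP ->; rewrite dvdn0.
set t := logn p a.
have ta : p ^ t %| a by apply: pfactor_dvdnn.
have nta : ~~ (p ^ t.+1 %| a) by rewrite pfactor_dvdn // ltnn.
have tr : t < r'.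
  rewrite ltnNge; apply: contra ha => h; apply: dvdn_trans ta; exact: dvdn_exp2l.
have tb : p ^ t %| b.
  rewrite /b; apply: dvdn_sub => //; apply: dvdn_trans dN; apply: dvdn_exp2l; lia.
have hY : p ^ ((r' - t) * 2) %| Y by apply: valG => //; lia.
have := @cancel_mod p (t.+1 * 2) ((r' - t) * 2) X Y Q Q' pp E (gen _ ta tb) hY cQ.
by rewrite (@arith_e t r' tr).
Qed.

Theorem mainTheorem3 (p m r : nat) :
  prime p -> odd p -> 0 < m -> 0 < r ->
  S (m * p ^ r) = S (m * p ^ r.-1) %[mod p ^ (2 * r)].
Proof.
move=> pp op m0; case: r => [//|r'] _ /=.
have p0 := prime_gt0 pp.
set N := m * p ^ r'.
have eN : m * p ^ r'.+1 = p * N by rewrite /N expnS; lia.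
have dN : p ^ r' %| N by apply: dvdn_mull.
have dN1 : p ^ r'.+1 %| p * N by rewrite expnS dvdn_pmul2l.
rewrite eN /S (@sum_split p N _ p0).
rewrite -modnDmr.
have -> : (\sum_(0 <= a < N) \sum_(0 <= j < p.-1)
   'C(p * N, p * a + j.+1) * 'C((p * a + j.+1).*2, p * a + j.+1) *
   'C((p * N - (p * a + j.+1)).*2, p * N - (p * a + j.+1))) %% p ^ (2 * r'.+1) = 0.
  apply/eqP; rewrite -/(dvdn _ _) big_nat_cond; apply: dvdn_sum => a /andP[/andP[_ aN] _].
  rewrite big_nat_cond; apply: dvdn_sum => j /andP[/andP[_ jp] _].
  apply: (@T_nonmult p r' N) => //.
    have : p * a.+1 <= p * N by rewrite leq_pmul2l.
    rewrite mulnS; lia.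
  rewrite dvdn_addr ?dvdn_mulr // gtnNdvd //; move: jp (prime_gt1 pp); lia.
rewrite addn0.
apply: sum_congr_mod => a /andP[_ aN].
exact: (@T_mult p r' N a).
Qed.
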